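(* Let $T$ be a completely non-unitary contraction on a Hilbert space $\mathcal{H}$ with finite-dimensional defect spaces such that $\mathcal{D}_T\subseteq\mathcal{D}_{T^*}$ and $\dim\mathcal{D}_T=1$. Then $T$ is hyponormal.
   Context: For a contraction $T$ on $\mathcal{H}$, the defect spaces are $\mathcal{D}_T=\overline{(I-T^*T)^{1/2}\mathcal{H}}$ and $\mathcal{D}_{T^*}=\overline{(I-TT^* )^{1/2}\mathcal{H}}$. A contraction is completely non-unitary if it has no nonzero reducing subspace on which it is unitary. $T$ is hyponormal if $T^*T\ge TT^*$. *)

(* Defs.v *)
From mathcomp Require Import all_boot all_order all_algebra complex reals.
Set Implicit Arguments. Unset Strict Implicit. Unset Printing Implicit Defensive.
Import Order.TTheory GRing.Theory Num.Theory.
Local Open Scope ring_scope.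

Section Hilbert.
Variables (R : realType) (V : lmodType R[i]) (ip : V -> V -> R[i]).

Definition hnorm (x : V) : R := Num.sqrt (complex.Re (ip x x)).

Definition cauchy_seq (u : nat -> V) : Prop :=
  forall eps : R, 0 < eps -> exists N : nat,
    forall m n : nat, (N <= m)%N -> (N <= n)%N -> hnorm (u m - u n) < eps.

Definition converges_to (u : nat -> V) (l : V) : Prop :=
  forall eps : R, 0 < eps -> exists N : nat,
    forall n : nat, (N <= n)%N -> hnorm (u n - l) < eps.

Definition hilbert_space : Prop :=
  [/\ forall (a : R[i]) (x y z : V), ip (a *: x + y) z = a * ip x z + ip y z,
      forall x y : V, ip y x = Num.conj (ip x y),
      forall x : V, 0 <= ip x x,
      forall x : V, ip x x = 0 -> x = 0
    & forall u : nat -> V, cauchy_seq u -> exists l, converges_to u l].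

Definition is_adjoint (A A' : V -> V) : Prop :=
  forall x y : V, ip (A x) y = ip x (A' y).

Definition contraction (A : V -> V) : Prop :=
  forall x : V, hnorm (A x) <= hnorm x.

Definition closure_of (M : V -> Prop) : V -> Prop :=
  fun x => forall eps : R, 0 < eps -> exists a, M a /\ hnorm (x - a) < eps.

Definition range_of (S : V -> V) : V -> Prop := fun y => exists x, y = S x.

Definition is_pos_sqrt (P S : V -> V) : Prop :=
  [/\ is_adjoint S S, forall x, 0 <= ip (S x) x & forall x, S (S x) = P x].

Definition defect_space (A A' : V -> V) : V -> Prop :=
  fun x => exists S, is_pos_sqrt (fun v => v - A' (A v)) S /\
                     closure_of (range_of S) x.

Definition subspace_dim (M : V -> Prop) (n : nat) : Prop :=
  exists b : 'I_n -> V,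
    (forall x, M x <-> exists c : 'I_n -> R[i], x = \sum_(k < n) c k *: b k) /\
    (forall c : 'I_n -> R[i], \sum_(k < n) c k *: b k = 0 -> forall k, c k = 0).

Definition finite_dimensional (M : V -> Prop) : Prop := exists n, subspace_dim M n.

Definition closed_subspace (M : V -> Prop) : Prop :=
  [/\ M 0, forall (a : R[i]) x y, M x -> M y -> M (a *: x + y)
    & forall x, closure_of M x -> M x].

Definition unitary_reducing (A A' : V -> V) (M : V -> Prop) : Prop :=
  [/\ closed_subspace M,
      forall x, M x -> M (A x) /\ M (A' x)
    & forall x, M x -> A' (A x) = x /\ A (A' x) = x].

Definition completely_non_unitary (A A' : V -> V) : Prop :=
  forall M, unitary_reducing A A' M -> forall x, M x -> x = 0.

Definition hyponormal (A A' : V -> V) : Prop :=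
  forall x : V, 0 <= ip (A' (A x) - A (A' x)) x.

End Hilbert.

(* Main.v *)
Require Import Defs.
From mathcomp Require Import all_boot all_order all_algebra complex reals.
From mathcomp Require Import ring lra.
Set Implicit Arguments. Unset Strict Implicit. Unset Printing Implicit Defensive.
Import Order.TTheory GRing.Theory Num.Theory.
Local Open Scope ring_scope.

Section IP.
Variables (R : realType) (V : lmodType R[i]) (ip : V -> V -> R[i]).
Hypothesis Hh : hilbert_space ip.
Let lin : forall (a : R[i]) (x y z : V), ip (a *: x + y) z = a * ip x z + ip y z.
Proof. by case: Hh. Qed.
Let csym : forall x y : V, ip y x = Num.conj (ip x y).
Proof. by case: Hh. Qed.
Let pos : forall x : V, 0 <= ip x x.
Proof. by case: Hh. Qed.
Let dfn : forall x : V, ip x x = 0 -> x = 0.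
Proof. by case: Hh. Qed.

Lemma ip0l z : ip 0 z = 0.
Proof.
have := lin 1 0 0 z; rewrite scaler0 addr0 mul1r.
by rewrite -{1}[ip 0 z]addr0 => /addrI ->.
Qed.
Lemma ipDl x y z : ip (x + y) z = ip x z + ip y z.
Proof. by have := lin 1 x y z; rewrite scale1r mul1r. Qed.
Lemma ipZl a x z : ip (a *: x) z = a * ip x z.
Proof. by have := lin a x 0 z; rewrite addr0 ip0l addr0. Qed.
Lemma ipNl x z : ip (- x) z = - ip x z.
Proof. by rewrite -scaleN1r ipZl mulN1r. Qed.
Lemma ipBl x y z : ip (x - y) z = ip x z - ip y z.
Proof. by rewrite ipDl ipNl. Qed.
Lemma ip0r z : ip z 0 = 0.
Proof. by rewrite csym ip0l conjC0. Qed.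
Lemma ipDr x y z : ip z (x + y) = ip z x + ip z y.
Proof. by rewrite csym ipDl rmorphD /= -!csym. Qed.
Lemma ipZr a x z : ip z (a *: x) = Num.conj a * ip z x.
Proof. by rewrite csym ipZl rmorphM /= -!csym. Qed.
Lemma ipNr x z : ip z (- x) = - ip z x.
Proof. by rewrite csym ipNl rmorphN /= -!csym. Qed.
Lemma ipBr x y z : ip z (x - y) = ip z x - ip z y.
Proof. by rewrite ipDr ipNr. Qed.
Lemma ipJ x : Num.conj (ip x x) = ip x x.
Proof. exact: geC0_conj. Qed.

Lemma cs x y : ip x y * Num.conj (ip x y) <= ip x x * ip y y.
Proof.
have [F0|Fn0] := eqVneq (ip y y) 0.
  by rewrite (dfn F0) ip0r ip0r mul0r mulr0.
set d := ip x y; set F := ip y y.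
have FJ : Num.conj F = F by exact: ipJ.
pose t := d / F.
have E : ip x x * F - d * Num.conj d = F * ip (x - t *: y) (x - t *: y).
  rewrite !ipBl !ipBr !ipZl !ipZr -/d -/F (csym x y) -/d /t rmorphM fmorphV /= FJ.
  by field; rewrite Fn0.
by rewrite -subr_ge0 E mulr_ge0 // (pos y).
Qed.

Lemma univ y e f : ip e e = 1 -> ip f f <= 1 ->
  0 <= ip y y - ip y f * Num.conj (ip y f) - (1 - ip f f) * (ip y e * Num.conj (ip y e)).
Proof.
move=> he hf.
set b := ip y e; set g := ip f e.
set y' := y - b *: e; set f' := f - g *: e.
have Ha : ip y y = ip y' y' + b * Num.conj b.
  rewrite /y' !ipBl !ipBr !ipZl !ipZr he (csym y e) -/b; ring.
have Hb : ip f f = ip f' f' + g * Num.conj g.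
  rewrite /f' !ipBl !ipBr !ipZl !ipZr he (csym f e) -/g; ring.
have Hc : ip y f = ip y' f' + b * Num.conj g.
  rewrite /y' /f' !ipBl !ipBr !ipZl !ipZr he (csym f e) -/b -/g; ring.
clearbody y' f'.
have Hd : ip (b *: f' - g *: y') (b *: f' - g *: y') =
   b * Num.conj b * ip f' f' - b * Num.conj g * Num.conj (ip y' f')
   - g * Num.conj b * ip y' f' + g * Num.conj g * ip y' y'.
  rewrite !ipBl !ipBr !ipZl !ipZr (csym y' f'); ring.
have E : ip y y - ip y f * Num.conj (ip y f) - (1 - ip f f) * (b * Num.conj b) =
  ip (b *: f' - g *: y') (b *: f' - g *: y') + ip y' y' * (1 - ip f f)
  + (ip y' y' * ip f' f' - ip y' f' * Num.conj (ip y' f')).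
  rewrite Hd Ha Hc [in RHS]Hb [in LHS]Hb rmorphD rmorphM /= conjCK; ring.
rewrite E; apply: addr_ge0; first apply: addr_ge0.
- exact: pos.
- by apply: mulr_ge0; [exact: pos | rewrite subr_ge0].
- by rewrite subr_ge0; exact: cs.
Qed.

Lemma decomp x e : ip e e = 1 ->
  ip x x = ip (x - ip x e *: e) (x - ip x e *: e) + ip x e * Num.conj (ip x e).
Proof.
move=> he; rewrite !ipBl !ipBr !ipZl !ipZr he (csym x e); ring.
Qed.

Lemma decomp_orth x e : ip e e = 1 -> ip (x - ip x e *: e) e = 0.
Proof. by move=> he; rewrite ipBl ipZl he mulr1 subrr. Qed.

Lemma core (T : {linear V -> V}) (T' : V -> V) e :
  (forall x y, ip (T x) y = ip x (T' y)) ->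
  ip e e = 1 -> ip (T e) (T e) <= 1 ->
  (forall r, ip r e = 0 -> T' (T r) = r) ->
  (forall z, T (T' z) = z -> ip z e = 0) ->
  forall x, 0 <= ip (T' (T x) - T (T' x)) x.
Proof.
move=> adj he hc H1 H2 x.
have adj2 u y : ip (T' u) y = ip u (T y).
  by rewrite csym -adj -csym.
have [f fE] : exists f, f = T e by eexists.
have [c cE] : exists c, c = ip f f by eexists.
have cJ : Num.conj c = c by rewrite cE ipJ.
have Tf : T' f = c *: e.
  have [s sE] : exists s, s = T' f - ip (T' f) e *: e by eexists.
  have se : ip s e = 0 by rewrite sE decomp_orth.
  have Ts : T' (T s) = s := H1 s se.
  have ss : ip s s = 0.
    rewrite {2}sE ipBr ipZr se mulr0 subr0.
    by rewrite -adj fE (csym (T e) (T s)) adj Ts (csym s e) se !conjC0.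
  have := dfn ss; rewrite sE => /eqP; rewrite subr_eq0 => /eqP ->.
  by rewrite adj2 -fE cE.
rewrite ipBl adj2 (adj (T' x)).
set b := ip x e.
have [x1 x1E] : exists x1, x1 = x - b *: e by eexists.
have x1e : ip x1 e = 0 by rewrite x1E decomp_orth.
have Tx1 : T' (T x1) = x1 := H1 x1 x1e.
have xE : x = b *: e + x1 by rewrite x1E addrC subrK.
have x1f : ip (T x1) f = 0 by rewrite adj Tf ipZr x1e mulr0.
have N1 : ip (T x) (T x) = ip x x - (1 - c) * (b * Num.conj b).
  rewrite [in LHS]xE linearD linearZ /= -fE (decomp x he) -/b -x1E.
  rewrite !ipDl !ipDr !ipZl !ipZr -cE (csym (T x1) f) x1f adj Tx1; ring.
have [g gE] : exists g, g = ip (T' x) e by eexists.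
have [r rE] : exists r, r = T' x - g *: e by eexists.
have re : ip r e = 0 by rewrite rE gE decomp_orth.
have Tr : T' (T r) = r := H1 r re.
have N2 : ip (T' x) (T' x) = g * Num.conj g + ip r r.
  by rewrite (decomp (T' x) he) -gE -rE addrC.
have gf : g = ip x f by rewrite gE adj2 fE.
have T'xE : T' x = g *: e + r by rewrite rE addrC subrK.
have ve : ip (T r) e = 0 by apply: H2; rewrite Tr.
have vf : ip (T r) f = 0 by rewrite adj Tf ipZr re mulr0.
have xv : ip x (T r) = ip r r.
  by rewrite -adj2 T'xE ipDl ipZl (csym r e) re conjC0 mulr0 add0r.
have vx : ip (T r) x = ip r r by rewrite csym xv ipJ.
have vv : ip (T r) (T r) = ip r r by rewrite adj Tr.
have hc' : ip f f <= 1 by rewrite fE.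
have := univ (x - T r) he hc'; rewrite -cE.
rewrite !ipBl !ipBr ve vf xv vx vv -/b -gf !subr0 N1 N2.
by congr (_ <= _); ring.
Qed.

Lemma hnorm0 : hnorm ip 0 = 0.
Proof. by rewrite /hnorm ip0l /= sqrtr0. Qed.

Lemma ipC x : ip x x = (complex.Re (ip x x))%:C%C.
Proof. by rewrite RRe_real // ger0_real. Qed.

End IP.

Lemma geC0_Re (R : realType) (z : R[i]) : 0 <= z -> z = (complex.Re z)%:C%C.
Proof. by move=> hz; rewrite RRe_real // ger0_real. Qed.


Lemma aux (R : realType) (k N D : R) :
  0 < k -> 0 <= N -> 0 <= D -> D * (N + 1) < k -> k <= D * N -> False.
Proof. move=> *; nra. Qed.

Theorem corollary3p7 (R : realType) (V : lmodType R[i]) (ip : V -> V -> R[i])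
    (T : {linear V -> V}) (T' : V -> V) :
  hilbert_space ip ->
  is_adjoint ip T T' ->
  contraction ip T ->
  completely_non_unitary ip T T' ->
  finite_dimensional (defect_space ip T T') ->
  finite_dimensional (defect_space ip T' T) ->
  (forall x, defect_space ip T T' x -> defect_space ip T' T x) ->
  subspace_dim (defect_space ip T T') 1 ->
  hyponormal ip T T'.
Proof.
move=> Hh adj contr _ _ _ incl [b [hspan hind]].
have [lin csym pos dfn _] := Hh.
set b0 := b ord0.
have spanE x : defect_space ip T T' x <-> exists k, x = k *: b0.
  split => [/hspan [c ->]|[k ->]]; first by exists (c ord0); rewrite big_ord1.
  by apply/hspan; exists (fun _ => k); rewrite big_ord1.
have Db0 : defect_space ip T T' b0 by apply/spanE; exists 1; rewrite scale1r.
have b0n : b0 != 0.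
  apply/eqP => b00; have := hind (fun _ => 1); rewrite big_ord1 scale1r.
  by move=> /(_ b00 ord0) /eqP; rewrite oner_eq0.
have H1b : forall r, ip r b0 = 0 -> T' (T r) = r.
  have [S [[Sadj Spos SS] _]] := Db0.
  have {}Sadj : forall x y, ip (S x) y = ip x (S y) := Sadj.
  have inD w : defect_space ip T T' (S w).
    exists S; split; first by split.
    move=> eps heps; exists (S w); split; first by exists w.
    by rewrite subrr (hnorm0 Hh).
  move=> r hr.
  have [k hk] := (spanE _).1 (inD r).
  have [k' hk'] := (spanE _).1 (inD b0).
  have Sr : S r = 0.
    apply: dfn; rewrite {2}hk (ipZr Hh) Sadj hk' (ipZr Hh) hr.
    by rewrite !mulr0.
  have S0 : S 0 = 0 by apply: dfn; rewrite Sadj (ip0l Hh).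
  have := SS r; rewrite Sr S0 => /esym /eqP; rewrite subr_eq0 => /eqP.
  by move=> <-.
have H2b : forall z, T (T' z) = z -> ip z b0 = 0.
  have [S [[Sadj Spos SS] cl]] := incl b0 Db0.
  have {}Sadj : forall x y, ip (S x) y = ip x (S y) := Sadj.
  move=> z hz.
  have Sz : S z = 0 by apply: dfn; rewrite Sadj SS hz subrr (ip0r Hh).
  have orth a : range_of S a -> ip a z = 0 by move=> [w ->]; rewrite Sadj Sz (ip0r Hh).
  suff : ip b0 z * Num.conj (ip b0 z) == 0.
    by rewrite mul_conjC_eq0 => /eqP h; rewrite csym h conjC0.
  set k := ip b0 z * Num.conj (ip b0 z).
  have k0 : 0 <= k by apply: mul_conjC_ge0.
  rewrite (geC0_Re k0); set kR := complex.Re k.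
  have kR0 : 0 <= kR by rewrite -ler0c -geC0_Re.
  suff -> : kR = 0 by []. apply/eqP; rewrite eq_le kR0 andbT.
  rewrite leNgt; apply/negP => kRp.
  set NR := complex.Re (ip z z).
  have NR0 : 0 <= NR by rewrite -ler0c -(ipC Hh).
  have q0 : 0 < kR / (NR + 1) by rewrite divr_gt0 // ltr_wpDl.
  have eps0 : 0 < Num.sqrt (kR / (NR + 1)) by rewrite sqrtr_gt0.
  have [a [ra hd]] := cl _ eps0.
  move: hd; rewrite /hnorm ltr_sqrt // ltr_pdivlMr ?ltr_wpDl //.
  set DR := complex.Re (ip (b0 - a) (b0 - a)) => hd.
  have DR0 : 0 <= DR by rewrite -ler0c -(ipC Hh).
  have := cs Hh (b0 - a) z.
  rewrite (ipBl Hh) (orth a ra) subr0 -/k (geC0_Re k0) (ipC Hh (b0 - a)) (ipC Hh z).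
  rewrite -rmorphM lecR -/NR -/DR -/kR => hk.
  exact: (aux kRp NR0 DR0 hd hk).
have nR0 : 0 < complex.Re (ip b0 b0).
  rewrite lt_def -ler0c -(ipC Hh) pos andbT; apply/eqP => h.
  by move/eqP: b0n; apply; apply: dfn; rewrite (ipC Hh) h.
set nR := complex.Re (ip b0 b0) in nR0.
set sR := Num.sqrt nR.
have sR0 : 0 < sR by rewrite sqrtr_gt0.
have sRn : sR != 0 by rewrite gt_eqF.
set e := (sR^-1)%:C%C *: b0.
have sJ : Num.conj (sR^-1)%:C%C = (sR^-1)%:C%C.
  by apply: geC0_conj; rewrite ler0c invr_ge0 ltW.
have sJ' : Num.conj sR%:C%C = sR%:C%C.
  by apply: geC0_conj; rewrite ler0c ltW.
have b0E : b0 = sR%:C%C *: e by rewrite /e scalerA -rmorphM mulfV // scale1r.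
have he : ip e e = 1.
  rewrite /e (ipZl Hh) (ipZr Hh) sJ (ipC Hh) -/nR -!rmorphM.
  have : sR ^+ 2 = nR by apply: sqr_sqrtr; apply: ltW.
  move=> <-; rewrite (_ : sR^-1 * (sR^-1 * sR ^+ 2) = 1) //.
  by field.
have hc : ip (T e) (T e) <= 1.
  have := contr e; rewrite /hnorm he /= ler_sqrt ?ler01 // => h.
  by rewrite (ipC Hh) -(rmorph1 (real_complex R)) lecR.
apply: (core Hh adj he hc).
- move=> r hr; apply: H1b; rewrite b0E (ipZr Hh) hr mulr0 //.
- move=> z hz; rewrite /e (ipZr Hh) H2b ?mulr0 //.
Qed.
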